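(* Let $\mathrm{AF}_{\mathcal R}(Y^{++})$ be the set of families $(x_\lambda)\in\mathcal R^{Y^{++}}$ with almost finite support. For every $(x_\lambda)\in\mathrm{AF}_{\mathcal R}(Y^{++})$ the family $(x_\lambda E(\lambda))_{\lambda\in Y^{++}}$ is summable in $\mathcal R[[Y]]$, and the map $E:\mathrm{AF}_{\mathcal R}(Y^{++})\to\mathcal R[[Y]]^{W^v}$, $(x_\lambda)\mapsto\sum_{\lambda\in Y^{++}}x_\lambda E(\lambda)$, is a well-defined bijection. In particular every element of $\mathcal R[[Y]]^{W^v}$ has support contained in $Y^+$.
   Context: $I$ finite, $A$ a generalized Cartan matrix, $X,Y$ dual free $\mathbb Z$-modules of finite rank with free families $(\alpha_i)_{i\in I}\subset X$, $(\alpha_i^\vee)_{i\in I}\subset Y$, $\alpha_j(\alpha_i^\vee)=a_{i,j}$; $\mathbb A=Y\otimes\mathbb R$; $r_i(v)=v-\alpha_i(v)\alpha_i^\vee$; $W^v=\langle r_i\rangle$; $Q^\vee_+=\bigoplus\mathbb N\alpha_i^\vee$ and $x\le_{Q^\vee}y$ iff $y-x\in Q^\vee_+$; $C^v_f=\{\alpha_i>0\ \forall i\}$, $\mathcal T=\bigcup_w w\overline{C^v_f}$, $Y^+=Y\cap\mathcal T$, $Y^{++}=Y\cap\overline{C^v_f}$. A set $E\subset Y$ is almost finite if there is a finite $J\subset Y$ with every element of $E$ $\le_{Q^\vee}$ some element of $J$. $\mathcal R$ is a commutative ring. $\mathcal R[[Y]]$ is the set of formal series $\sum_{\lambda\in Y}a_\lambda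 e^\lambda$ with almost finite support, with $e^\lambda e^\mu=e^{\lambda+\mu}$; $\mathcal R[[Y]]^{W^v}$ is the set of such series with $a_{w(\lambda)}=a_\lambda$ for all $w\in W^v$. A family $(a_j)_{j\in J}$ in $\mathcal R[[Y]]$ is summable if for each $\lambda$ only finitely many $a_j$ have nonzero coefficient at $e^\lambda$ and the union of the supports is almost finite; its sum is taken coefficientwise. For $\lambda\in Y^{++}$, $E(\lambda)=\sum_{\mu\in W^v\lambda}e^\mu\in\mathcal R[[Y]]$. *)

(* Defs.v *)
From HB Require Import structures.
From mathcomp Require Import all_boot all_order all_algebra.
From Stdlib Require Import ClassicalEpsilon.
Set Implicit Arguments. Unset Strict Implicit. Unset Printing Implicit Defensive.
Import Order.TTheory GRing.Theory Num.Theory.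
Local Open Scope ring_scope.

(* Y = X = Z^n (free Z-modules of rank n), realised as integer row vectors;
   the duality X x Y -> Z is the standard dot product. *)
Notation lat n := 'rV[int]_n.

Definition pairing (n : nat) (x : lat n) (y : lat n) : int :=
  \sum_(k < n) x ord0 k * y ord0 k.

Definition free_family (I : finType) (n : nat) (v : I -> lat n) : Prop :=
  forall c : I -> int, \sum_(i : I) c i *: v i = 0 -> forall i, c i = 0.

Definition gen_cartan (I : finType) (A : I -> I -> int) : Prop :=
  [/\ forall i, A i i = 2,
      forall i j, i != j -> A i j <= 0
    & forall i j, A i j = 0 <-> A j i = 0].

Definition refl (I : finType) (n : nat) (alpha alphav : I -> lat n) (i : I)
  (v : lat n) : lat n :=
  v - (pairing (alpha i) v) *: alphav i.

Definition wact (I : finType) (n : nat) (alpha alphav : I -> lat n)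
  (s : seq I) (v : lat n) : lat n :=
  foldr (refl alpha alphav) v s.

Definition leQ (I : finType) (n : nat) (alphav : I -> lat n) (x y : lat n) : Prop :=
  exists c : I -> nat, y - x = \sum_(i : I) (c i)%:Z *: alphav i.

Definition almost_finite (I : finType) (n : nat) (alphav : I -> lat n)
  (E : lat n -> Prop) : Prop :=
  exists J : seq (lat n), forall x, E x -> exists2 j, j \in J & leQ alphav x j.

(* Y^{++} = Y \cap closure(C^v_f) *)
Definition Ypp (I : finType) (n : nat) (alpha : I -> lat n) (l : lat n) : Prop :=
  forall i, 0 <= pairing (alpha i) l.

(* Y^+ = Y \cap \bigcup_w w(closure C^v_f):  l \in w(closure C) iff w^{-1} l in closure C *)
Definition Yplus (I : finType) (n : nat) (alpha alphav : I -> lat n) (l : lat n) : Prop :=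
  exists s : seq I, Ypp alpha (wact alpha alphav s l).

(* formal series: coefficient functions Y -> R *)
Definition in_series (R : pzRingType) (I : finType) (n : nat) (alphav : I -> lat n)
  (f : lat n -> R) : Prop :=
  almost_finite alphav (fun mu => f mu != 0).

Definition W_invariant (R : pzRingType) (I : finType) (n : nat) (alpha alphav : I -> lat n)
  (f : lat n -> R) : Prop :=
  forall (s : seq I) mu, f (wact alpha alphav s mu) = f mu.

Definition in_inv_series (R : pzRingType) (I : finType) (n : nat) (alpha alphav : I -> lat n)
  (f : lat n -> R) : Prop :=
  in_series alphav f /\ W_invariant alpha alphav f.

(* E(lambda) = sum_{mu in W^v lambda} e^mu *)
Definition in_orbit (I : finType) (n : nat) (alpha alphav : I -> lat n) (l mu : lat n) : Prop :=
  exists s : seq I, mu = wact alpha alphav s l.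

Definition Eorb (R : pzRingType) (I : finType) (n : nat) (alpha alphav : I -> lat n)
  (l : lat n) : lat n -> R :=
  fun mu => if excluded_middle_informative (in_orbit alpha alphav l mu) then 1 else 0.

Definition summable (R : pzRingType) (I : finType) (n : nat) (alphav : I -> lat n)
  (J : eqType) (P : J -> Prop) (F : J -> lat n -> R) : Prop :=
  (forall mu, exists s : seq J, forall j, P j -> F j mu != 0 -> j \in s) /\
  almost_finite alphav (fun mu => exists j, P j /\ F j mu != 0).

Definition is_sum (R : pzRingType) (n : nat) (J : eqType) (P : J -> Prop)
  (F : J -> lat n -> R) (g : lat n -> R) : Prop :=
  forall mu, exists s : seq J,
    [/\ uniq s, forall j, j \in s -> P j,
        forall j, P j -> F j mu != 0 -> j \in s
      & g mu = \sum_(j <- s) F j mu].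

(* AF_R(Y^{++}): families indexed by Y^{++} (values off Y^{++} irrelevant) with
   almost finite support *)
Definition AF (R : pzRingType) (I : finType) (n : nat) (alpha alphav : I -> lat n)
  (x : lat n -> R) : Prop :=
  almost_finite alphav (fun l => Ypp alpha l /\ x l != 0).

Definition Efam (R : pzRingType) (I : finType) (n : nat) (alpha alphav : I -> lat n)
  (x : lat n -> R) : lat n -> lat n -> R :=
  fun l mu => x l * Eorb R alpha alphav l mu.

(* Main.v *)
Require Import Defs.
From HB Require Import structures.
From mathcomp Require Import all_boot all_order all_algebra.
From mathcomp Require Import ring lra zify.
From Stdlib Require Import ClassicalEpsilon.
Set Implicit Arguments. Unset Strict Implicit. Unset Printing Implicit Defensive.
Import Order.TTheory GRing.Theory Num.Theory.
Local Open Scope ring_scope.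

Lemma pairingD n (x u v : lat n) : pairing x (u + v) = pairing x u + pairing x v.
Proof. by rewrite /pairing -big_split; apply eq_bigr => k _; rewrite mxE mulrDr. Qed.
Lemma pairingZ n (x v : lat n) c : pairing x (c *: v) = c * pairing x v.
Proof. by rewrite /pairing mulr_sumr; apply eq_bigr => k _; rewrite mxE mulrCA. Qed.
Lemma pairingN n (x v : lat n) : pairing x (- v) = - pairing x v.
Proof. by rewrite -scaleN1r pairingZ mulN1r. Qed.
Lemma pairingB n (x u v : lat n) : pairing x (u - v) = pairing x u - pairing x v.
Proof. by rewrite pairingD pairingN. Qed.
Lemma pairing0 n (x : lat n) : pairing x 0 = 0.
Proof. by rewrite /pairing big1 // => k _; rewrite mxE mulr0. Qed.
Lemma pairing_sum n (x : lat n) (J : finType) (c : J -> int) (v : J -> lat n) :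
  pairing x (\sum_j c j *: v j) = \sum_j c j * pairing x (v j).
Proof.
elim/big_rec2: _ => [|j y1 y2 _ <-]; first by rewrite pairing0.
by rewrite pairingD pairingZ.
Qed.
Section Rank2.
Variables a b : int.

Definition Ri (s : int * int) : int * int := (- s.1, s.2 + a * s.1).
Definition Rj (s : int * int) : int * int := (s.1 + b * s.2, - s.2).

Fixpoint altI k s := if k is k'.+1 then Ri (altJ k' s) else s
with altJ k s := if k is k'.+1 then Rj (altI k' s) else s.

Definition Ri4 (s : int * int * int * int) : int * int * int * int :=
  (s.1.1.1 - s.1.2, s.1.1.2, - s.1.2, s.2 + a * s.1.2).
Definition Rj4 (s : int * int * int * int) : int * int * int * int :=
  (s.1.1.1, s.1.1.2 - s.2, s.1.2 + b * s.2, - s.2).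

Fixpoint alt4I k s := if k is k'.+1 then Ri4 (alt4J k' s) else s
with alt4J k s := if k is k'.+1 then Rj4 (alt4I k' s) else s.

Definition InvJ (s : int * int) := 0 <= s.1 /\ 0 <= a * s.1 + 2 * s.2.
Definition InvI (s : int * int) := 0 <= s.2 /\ 0 <= b * s.2 + 2 * s.1.

Lemma inv_alt (ha : 0 <= a) (hb : 0 <= b) (hab : 4 <= a * b) x y :
  0 <= x -> 0 <= y -> forall k, InvJ (altJ k (x, y)) /\ InvI (altI k (x, y)).
Proof.
move=> hx hy; elim=> [|k [IHJ IHI]] /=.
  by rewrite /InvJ /InvI /=; split; split; lia.
split.
- move: IHI; case: (altI k (x, y)) => X Y; rewrite /InvI /InvJ /Rj /= => -[h1 h2].
  split; first nia.
  have : 0 <= (a * b - 4) * Y by apply: mulr_ge0; lia.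
  have : 0 <= a * (b * Y + 2 * X) by apply: mulr_ge0.
  nia.
- move: IHJ; case: (altJ k (x, y)) => X Y; rewrite /InvI /InvJ /Ri /= => -[h1 h2].
  have : 0 <= (a * b - 4) * X by apply: mulr_ge0; lia.
  have : 0 <= b * (a * X + 2 * Y) by apply: mulr_ge0.
  split; nia.
Qed.

End Rank2.
Definition fin_cases (a b : int) (m : nat) :=
  (a, b, m) = (0, 0, 2%N) \/ (a, b, m) = (1, 1, 3%N) \/ (a, b, m) = (1, 2, 4%N) \/
   (a, b, m) = (2, 1, 4%N) \/ (a, b, m) = (1, 3, 6%N) \/ (a, b, m) = (3, 1, 6%N).

Lemma fin_pos (a b : int) (m : nat) x y :
  fin_cases a b m -> 0 <= x -> 0 <= y ->
  (forall k, (k < m)%N -> 0 <= (altJ a b k (x, y)).1).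
Proof.
move=> H hx hy.
case: H => [[-> -> ->]|[[-> -> ->]|[[-> -> ->]|[[-> -> ->]|[[-> -> ->]|[-> -> ->]]]]]];
 do 7 (case => //=; rewrite /Ri /Rj /=; try lia).
Qed.

Lemma fin_braid (a b : int) (m : nat) x y :
  fin_cases a b m ->
  (alt4I a b m (0, 0, x, y)).1.1 = (alt4J a b m (0, 0, x, y)).1.1.
Proof.
move=> H.
case: H => [[-> -> ->]|[[-> -> ->]|[[-> -> ->]|[[-> -> ->]|[[-> -> ->]|[-> -> ->]]]]]];
   rewrite /= /Ri4 /Rj4 /=; congr pair; ring.
Qed.
Section Theory.
Variables (I : finType) (n : nat) (A : I -> I -> int) (alpha alphav : I -> lat n).
Hypotheses (hA : gen_cartan A) (fav : free_family alphav)
  (hpair : forall i j, pairing (alpha j) (alphav i) = A i j).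

Local Notation al i v := (pairing (alpha i) v).
Local Notation r := (refl alpha alphav).
Local Notation W := (wact alpha alphav).
Local Notation le := (leQ alphav).

Lemma Aii i : A i i = 2. Proof. by case: hA. Qed.

Lemma al_refl i j v : al j (r i v) = al j v - al i v * A i j.
Proof. by rewrite /refl pairingB pairingZ hpair. Qed.

Lemma al_refl_self i v : al i (r i v) = - al i v.
Proof. rewrite al_refl Aii; ring. Qed.

Lemma reflK i v : r i (r i v) = v.
Proof.
rewrite {1}/refl al_refl_self /refl scaleNr opprK.
by rewrite addrNK.
Qed.

Lemma wact_cat s t v : W (s ++ t) v = W s (W t v).
Proof. by rewrite /wact foldr_cat. Qed.

Lemma wact_cons i s v : W (i :: s) v = r i (W s v).
Proof. by []. Qed.

Lemma wact_revK s v : W (rev s) (W s v) = v.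
Proof.
elim: s v => [//|i s IH] v.
by rewrite rev_cons -cats1 wact_cat /= reflK IH.
Qed.

Lemma wact_Krev s v : W s (W (rev s) v) = v.
Proof. by rewrite -{1}(revK s) wact_revK. Qed.

Lemma sum_single (i : I) (m : int) :
  \sum_k (if k == i then m else 0) *: alphav k = m *: alphav i.
Proof.
rewrite (bigD1 i) //= eqxx big1 ?addr0 // => k /negbTE ->.
by rewrite scale0r.
Qed.

Lemma leQ_refl x : le x x.
Proof. by exists (fun _ => 0%N); rewrite subrr big1 // => k _; rewrite scale0r. Qed.

Lemma leQ_trans x y z : le x y -> le y z -> le x z.
Proof.
move=> [c1 h1] [c2 h2]; exists (fun k => c1 k + c2 k)%N.
have -> : z - x = (z - y) + (y - x) by rewrite addrA addrNK.
rewrite h1 h2 -big_split; apply eq_bigr => k _.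
by rewrite PoszD scalerDl addrC.
Qed.

Lemma coef_unique (c c' : I -> nat) :
  \sum_k (c k)%:Z *: alphav k = \sum_k (c' k)%:Z *: alphav k -> c =1 c'.
Proof.
move=> h k.
have h0 : \sum_k ((c k)%:Z - (c' k)%:Z) *: alphav k = 0.
  rewrite (eq_bigr (fun k => (c k)%:Z *: alphav k - (c' k)%:Z *: alphav k)).
    by rewrite sumrB h subrr.
  by move=> j _; rewrite scalerBl.
have := fav h0 k; move/eqP; rewrite subr_eq0 => /eqP [] //.
Qed.

Lemma leQ_anti x y : le x y -> le y x -> x = y.
Proof.
move=> [c1 h1] [c2 h2].
have hs : \sum_k (c1 k + c2 k)%N%:Z *: alphav k = \sum_k (0%N)%:Z *: alphav k.
  rewrite [RHS]big1; last by move=> k _; rewrite scale0r.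
  rewrite (eq_bigr (fun k => (c1 k)%:Z *: alphav k + (c2 k)%:Z *: alphav k)).
    by rewrite big_split /= -h1 -h2 addrA addrNK subrr.
  by move=> k _; rewrite PoszD scalerDl.
have hc := coef_unique hs.
have : y - x = 0.
  rewrite h1 big1 // => k _.
  have := hc k; move=> e; have -> : c1 k = 0%N by lia.
  by rewrite scale0r.
by move/eqP; rewrite subr_eq0 => /eqP.
Qed.
Lemma leQ_step i v : 0 <= al i v -> le (r i v) v.
Proof.
move=> h; exists (fun k => if k == i then `|al i v|%N else 0%N).
rewrite (eq_bigr (fun k => (if k == i then `|al i v|%:Z else 0) *: alphav k)).
  by rewrite sum_single gez0_abs // /refl opprB addrC subrK.
by move=> k _; case: (k == i).
Qed.

Lemma leQ_stepN i v : al i v <= 0 -> le v (r i v).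
Proof.
move=> h; exists (fun k => if k == i then `|al i v|%N else 0%N).
rewrite (eq_bigr (fun k => (if k == i then `|al i v|%:Z else 0) *: alphav k)).
  by rewrite sum_single lez0_abs // /refl addrAC subrr add0r scaleNr.
by move=> k _; case: (k == i).
Qed.

Fixpoint alt (x y : I) (k : nat) : seq I := if k is k'.+1 then x :: alt y x k' else [::].

Lemma alt_last x y m : alt x y m.+1 = alt x y m ++ [:: if odd m then y else x].
Proof.
elim: m x y => [//|m IH] x y.
rewrite -[alt x y m.+2]/(x :: alt y x m.+1) IH -[alt x y m.+1]/(x :: alt y x m) /=.
by case: (odd m).
Qed.

Lemma alt_add x y p q : alt x y (p + q) = alt x y p ++ (if odd p then alt y x q else alt x y q).
Proof.
elim: p x y => [//|p IH] x y.
by rewrite addSn /= IH; case: (odd p).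
Qed.

Lemma size_alt x y k : size (alt x y k) = k.
Proof. by elim: k x y => [//|k IH] x y /=; rewrite IH. Qed.

Lemma alt_mem x y k : all (fun z => (z == x) || (z == y)) (alt x y k).
Proof.
elim: k x y => [//|k IH] x y /=; rewrite eqxx /=.
by apply: sub_all (IH y x) => z; rewrite orbC.
Qed.

Lemma split_alt x y (u : seq I) : all (fun z => (z == x) || (z == y)) u ->
  (exists s1 t s2, u = s1 ++ t :: t :: s2) \/ u = alt x y (size u) \/ u = alt y x (size u).
Proof.
elim: u => [|z u IH] /=; first by right; left.
case/andP => hz /IH [[s1 [t [s2 ->]]]|[hu|hu]].
- by left; exists (z :: s1), t, s2.
- case/orP: hz => /eqP ->.
  + case: (size u) hu => [|k] hu; first by rewrite hu; right; left.
    by left; exists [::], x, (alt y x k); rewrite hu.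
  + by right; right; rewrite /= -hu.
- case/orP: hz => /eqP ->.
  + by right; left; rewrite /= -hu.
  + case: (size u) hu => [|k] hu; first by rewrite hu; right; right.
    by left; exists [::], y, (alt x y k); rewrite hu.
Qed.

Lemma wact_dup s1 t s2 v : W (s1 ++ t :: t :: s2) v = W (s1 ++ s2) v.
Proof. by rewrite !wact_cat /= reflK. Qed.
Definition vec i j v (s : int * int * int * int) := v + s.1.1.1 *: alphav i + s.1.1.2 *: alphav j.
Definition good i j v (s : int * int * int * int) :=
  s.1.2 = al i (vec i j v s) /\ s.2 = al j (vec i j v s).

Lemma good_Ri i j v s : good i j v s ->
  good i j v (Ri4 (- A i j) s) /\ r i (vec i j v s) = vec i j v (Ri4 (- A i j) s).
Proof.
case: s => [[[p q] X] Y]; rewrite /good /vec /Ri4 /= => -[hX hY].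
have e : v + (p - X) *: alphav i + q *: alphav j = r i (v + p *: alphav i + q *: alphav j).
  by rewrite /refl -hX scalerBl -!addrA; congr (_ + (_ + _)); exact: addrC.
rewrite e al_refl_self al_refl -hX -hY; split => //; split => //; ring.
Qed.

Lemma good_Rj i j v s : good i j v s ->
  good i j v (Rj4 (- A j i) s) /\ r j (vec i j v s) = vec i j v (Rj4 (- A j i) s).
Proof.
case: s => [[[p q] X] Y]; rewrite /good /vec /Rj4 /= => -[hX hY].
have e : v + p *: alphav i + (q - Y) *: alphav j = r j (v + p *: alphav i + q *: alphav j).
  by rewrite /refl -hY scalerBl -!addrA.
rewrite e al_refl_self al_refl -hX -hY; split => //; split => //; ring.
Qed.

Lemma alt4_spec i j v s k : good i j v s ->
  (good i j v (alt4I (- A i j) (- A j i) k s) /\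
     W (alt i j k) (vec i j v s) = vec i j v (alt4I (- A i j) (- A j i) k s)) /\
  (good i j v (alt4J (- A i j) (- A j i) k s) /\
     W (alt j i k) (vec i j v s) = vec i j v (alt4J (- A i j) (- A j i) k s)).
Proof.
move=> hs; elim: k => [|k [[g1 e1] [g2 e2]]] //=.
rewrite e1 e2; split.
- exact: good_Ri g2.
- exact: good_Rj g1.
Qed.

Lemma alt2_spec i j v k :
  (al i (W (alt i j k) v), al j (W (alt i j k) v)) = altI (- A i j) (- A j i) k (al i v, al j v) /\
  (al i (W (alt j i k) v), al j (W (alt j i k) v)) = altJ (- A i j) (- A j i) k (al i v, al j v).
Proof.
elim: k => [|k [e1 e2]] //=; split.
- by rewrite -e2 /Ri /= al_refl_self al_refl; congr pair; ring.
- by rewrite -e1 /Rj /= al_refl_self al_refl; congr pair; ring.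
Qed.

Lemma braid i j m : fin_cases (- A i j) (- A j i) m ->
  forall v, W (alt i j m) v = W (alt j i m) v.
Proof.
move=> hf v.
pose s0 : int * int * int * int := (0, 0, al i v, al j v).
have hv : vec i j v s0 = v by rewrite /vec /= !scale0r !addr0.
have g0 : good i j v s0 by rewrite /good hv.
have [[_ e1] [_ e2]] := alt4_spec m g0.
move: e1 e2; rewrite hv => -> ->.
by rewrite /vec (fin_braid (al i v) (al j v) hf).
Qed.
Lemma ab_cases i j : i != j ->
  4 <= (- A i j) * (- A j i) \/ exists m, fin_cases (- A i j) (- A j i) m.
Proof.
move=> hij; case: hA => _ hneg hz.
have ha : 0 <= - A i j by rewrite oppr_ge0; apply: hneg.
have hb : 0 <= - A j i by rewrite oppr_ge0; apply: hneg; rewrite eq_sym.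
have h1 : - A i j = 0 -> - A j i = 0.
  by move/eqP; rewrite oppr_eq0 => /eqP /(hz i j) ->; rewrite oppr0.
have h2 : - A j i = 0 -> - A i j = 0.
  by move/eqP; rewrite oppr_eq0 => /eqP /(hz i j) ->; rewrite oppr0.
move: ha hb h1 h2; set a := - A i j; set b := - A j i => ha hb h1 h2.
have : 4 <= a * b \/ (a = 0 /\ b = 0) \/ (a = 1 /\ b = 1) \/ (a = 1 /\ b = 2) \/
   (a = 2 /\ b = 1) \/ (a = 1 /\ b = 3) \/ (a = 3 /\ b = 1) by nia.
rewrite /fin_cases.
case=> [|[[-> ->]|[[-> ->]|[[-> ->]|[[-> ->]|[[-> ->]|[-> ->]]]]]]]; first by left.
- by right; exists 2%N; left.
- by right; exists 3%N; right; left.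
- by right; exists 4%N; do 2 right; left.
- by right; exists 4%N; do 3 right; left.
- by right; exists 6%N; do 4 right; left.
- by right; exists 6%N; do 5 right.
Qed.
Definition inij i j (u : seq I) := all (fun z => (z == i) || (z == j)) u.

Lemma inij_alt i j k : inij i j (alt i j k) /\ inij i j (alt j i k).
Proof.
split; first exact: alt_mem.
by apply: sub_all (alt_mem j i k) => z; rewrite orbC.
Qed.

Lemma D i j (hij : i != j) nu : 0 <= al i nu -> 0 <= al j nu ->
  forall u, inij i j u -> al i (W u nu) < 0 ->
  exists2 u', inij i j u' & W u' nu = r i (W u nu) /\ (size u' < size u)%N.
Proof.
move=> hi hj u; move: {2}(size u) (leqnn (size u)) => N.
elim: N u => [|N IH] u hN hu hneg.
  by move: hN; rewrite leqn0 => /nilP hu0; move: hneg; rewrite hu0 /= ltNge hi.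
case: (split_alt hu) => [[s1 [t [s2 hu']]]|[hu'|hu']].
- have hu2 : inij i j (s1 ++ s2) by move: hu; rewrite /inij hu' !all_cat /= => /and3P [-> _ /andP [_ ->]].
  have hs : size (s1 ++ s2) = (size u - 2)%N by rewrite hu' !size_cat /= !addnS subn2.
  have := IH (s1 ++ s2); rewrite hs; case.
  + by move: hN; rewrite hu' size_cat /= !addnS; lia.
  + exact: hu2.
  + by rewrite -(wact_dup _ t) -hu'.
  move=> u' hu'1 [e hsz]; exists u' => //; split.
    by rewrite e hu' wact_dup.
  by move: hsz; rewrite hu' size_cat /= !addnS; lia.
- move: hu' hneg; case: (size u) => [|k] hu' hneg.
    by move: hneg; rewrite hu' /= ltNge hi.
  exists (alt j i k); first by case: (inij_alt i j k).
  by split; [rewrite hu' /= reflK | rewrite size_alt].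
- set k := size u in hu'.
  have pk : 0 <= al i (W (alt j i k) nu) -> False.
    by rewrite -hu' => h; move: hneg; rewrite ltNge h.
  have [e1 e2] := alt2_spec i j nu k.
  have hfst : al i (W (alt j i k) nu) = (altJ (- A i j) (- A j i) k (al i nu, al j nu)).1
    by rewrite -e2.
  case: (ab_cases hij) => [hinf|[m hfin]].
    exfalso; apply: pk; rewrite hfst.
    have ha : 0 <= - A i j by rewrite oppr_ge0; case: hA => _ hn _; apply: hn.
    have hb : 0 <= - A j i by rewrite oppr_ge0; case: hA => _ hn _; apply: hn; rewrite eq_sym.
    by have [[]] := inv_alt ha hb hinf hi hj k.
  have [hkm|hmk] := ltnP k m.
    by exfalso; apply: pk; rewrite hfst; apply: fin_pos hfin hi hj k hkm.
  have hm : (0 < m)%N by case: hfin => [[_ _ ->]|[[_ _ ->]|[[_ _ ->]|[[_ _ ->]|[[_ _ ->]|[_ _ ->]]]]]].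
  move: hm hmk; case: m hfin => [//|m'] hfin _ hmk.
  have hq : (k.+1 = m'.+1 + (k - m'.+1).+1)%N by lia.
  have ew : r i (W u nu) = W (alt j i m'.+1 ++
      (if odd m'.+1 then alt j i (k - m'.+1).+1 else alt i j (k - m'.+1).+1)) nu.
    rewrite hu' -wact_cons -[i :: _]/(alt i j k.+1) hq alt_add !wact_cat.
    by rewrite braid.
  rewrite alt_last /= in ew.
  case hodd : (odd m') ew => /= ew.
  + exists (alt j i m' ++ alt j i (k - m'.+1)).
      by rewrite /inij all_cat; apply/andP; split; [exact: (proj2 (inij_alt i j _))|exact: (proj2 (inij_alt i j _))].
    split; last by rewrite size_cat !size_alt; lia.
    by rewrite ew -catA /= wact_dup.
  + exists (alt j i m' ++ alt i j (k - m'.+1)).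
      by rewrite /inij all_cat; apply/andP; split; [exact: (proj2 (inij_alt i j _))|exact: (proj1 (inij_alt i j _))].
    split; last by rewrite size_cat !size_alt; lia.
    by rewrite ew -catA /= wact_dup.
Qed.
Definition pb (P : Prop) : bool := if excluded_middle_informative P then true else false.
Lemma pbP (P : Prop) : reflect P (pb P).
Proof. by rewrite /pb; case: excluded_middle_informative => h; constructor. Qed.

Definition orbit lam mu := exists s, mu = W s lam.

Definition dist (lam mu : lat n) : nat :=
  match excluded_middle_informative (exists k, pb (exists s, size s = k /\ mu = W s lam)) with
  | left h => ex_minn h | right _ => 0%N end.

Lemma dist_spec lam mu s : mu = W s lam ->
  (dist lam mu <= size s)%N /\ exists t, size t = dist lam mu /\ mu = W t lam.
Proof.
move=> hs; rewrite /dist; case: excluded_middle_informative => [h|h]; last first.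
  by exfalso; apply: h; exists (size s); apply/pbP; exists s.
case: ex_minnP => m /pbP hm hmin; split.
  by apply: hmin; apply/pbP; exists s.
by case: hm => t [ht e]; exists t.
Qed.

Lemma dist_le lam mu s : mu = W s lam -> (dist lam mu <= size s)%N.
Proof. by move=> h; case: (dist_spec h). Qed.

Lemma dist_ex lam mu : orbit lam mu -> exists t, size t = dist lam mu /\ mu = W t lam.
Proof. by case=> s h; case: (dist_spec h). Qed.

Lemma orbit_W lam mu u : orbit lam mu -> orbit lam (W u mu).
Proof. by case=> s ->; exists (u ++ s); rewrite wact_cat. Qed.

Lemma dist_W lam mu u : orbit lam mu -> (dist lam (W u mu) <= dist lam mu + size u)%N.
Proof.
move=> /dist_ex [t [ht e]].
rewrite {1}e -wact_cat; apply: leq_trans (dist_le (erefl _)) _.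
by rewrite size_cat ht addnC.
Qed.

Lemma M lam (hl : forall i, 0 <= al i lam) N : forall mu i,
  (dist lam mu <= N)%N -> orbit lam mu -> al i mu < 0 -> (dist lam (r i mu) < dist lam mu)%N.
Proof.
elim: N => [|N IH] mu i hN ho hneg.
  have [t [ht e]] := dist_ex ho.
  move: hN; rewrite leqn0 -ht => /nilP ht0; move: hneg; rewrite e ht0 /= ltNge.
  by rewrite hl.
have [t [ht e]] := dist_ex ho.
case: t ht e => [|j t'] ht e.
  by move: hneg; rewrite e /= ltNge hl.
set mu' := W t' lam.
have ho' : orbit lam mu' by exists t'.
have hd' : (dist lam mu' <= size t')%N by apply: dist_le.
have emu : mu = r j mu' by rewrite e.
have hdmu : (dist lam mu <= dist lam mu' + 1)%N.
  by rewrite emu -[r j mu']/(W [:: j] mu'); apply: dist_W.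
have ht2 : dist lam mu = (size t').+1 by rewrite -ht.
case: (eqVneq j i) => [eji|nji].
  by rewrite emu eji reflK -eji -emu ht2 ltnS.
pose P m := pb (exists nu u, [/\ orbit lam nu, inij i j u, W u nu = mu,
   (dist lam nu + size u)%N = dist lam mu & dist lam nu = m]).
have hP : exists m, P m.
  exists (dist lam mu'); apply/pbP; exists mu', [:: j]; split.
  - exact: ho'.
  - by rewrite /inij /= eqxx orbT.
  - by rewrite emu.
  - by rewrite /=; lia.
  - by [].
case: (ex_minnP hP) => m /pbP [nu [u [hon hiu hWu hsum hm]]] hmin.
have hmu' : (m <= dist lam mu')%N.
  apply: hmin; apply/pbP; exists mu', [:: j]; split.
  - exact: ho'.
  - by rewrite /inij /= eqxx orbT.
  - by rewrite emu.
  - by rewrite /=; lia.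
  - by [].
have hnuN : (dist lam nu <= N)%N by lia.
have key : forall x, (x == i) || (x == j) -> 0 <= al x nu.
  move=> x hx; rewrite leNgt; apply/negP => hx0.
  have hlt := IH nu x hnuN hon hx0.
  have hon' : orbit lam (r x nu) by apply: (orbit_W [:: x]) hon.
  have hW' : W (u ++ [:: x]) (r x nu) = mu by rewrite wact_cat /= reflK.
  have hle : (dist lam mu <= dist lam (r x nu) + size (u ++ [:: x]))%N.
    by rewrite -{1}hW'; apply: dist_W.
  have : (m <= dist lam (r x nu))%N.
    apply: hmin; apply/pbP; exists (r x nu), (u ++ [:: x]); split => //.
      by rewrite /inij all_cat; apply/andP; split; [exact: hiu|rewrite /= hx].
    by move: hle; rewrite size_cat /=; lia.
  by lia.
have hi : 0 <= al i nu by apply: key; rewrite eqxx.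
have hj : 0 <= al j nu by apply: key; rewrite eqxx orbT.
have hij : i != j by rewrite eq_sym.
have hnu : al i (W u nu) < 0 by rewrite hWu.
have [u'' hiu'' [hW'' hsz]] := D hij hi hj hiu hnu.
have := dist_W u'' hon; rewrite hW'' hWu; lia.
Qed.

Lemma K lam (hl : forall i, 0 <= al i lam) N : forall mu,
  (dist lam mu <= N)%N -> orbit lam mu -> le mu lam.
Proof.
elim: N => [|N IH] mu hN ho.
  have [t [ht e]] := dist_ex ho.
  by move: hN; rewrite leqn0 -ht => /nilP ht0; rewrite e ht0; apply: leQ_refl.
have [t [ht e]] := dist_ex ho.
case: t ht e => [|j t'] ht e; first by rewrite e; apply: leQ_refl.
set mu' := W t' lam.
have ho' : orbit lam mu' by exists t'.
have hd' : (dist lam mu' <= size t')%N by apply: dist_le.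
have emu : mu = r j mu' by rewrite e.
have ht2 : dist lam mu = (size t').+1 by rewrite -ht.
have hj : 0 <= al j mu'.
  rewrite leNgt; apply/negP => hneg.
  have := M hl (leqnn _) ho' hneg; rewrite -emu; lia.
apply: leQ_trans (IH mu' _ ho'); last by lia.
by rewrite emu; apply: leQ_step.
Qed.

Lemma orbit_le lam mu : (forall i, 0 <= al i lam) -> orbit lam mu -> le mu lam.
Proof. by move=> hl ho; apply: (K hl (leqnn _) ho). Qed.
Lemma orbit_sym l mu : orbit l mu -> orbit mu l.
Proof. by case=> s ->; exists (rev s); rewrite wact_revK. Qed.

Lemma orbit_trans l mu nu : orbit l mu -> orbit mu nu -> orbit l nu.
Proof. by case=> s -> [t ->]; exists (t ++ s); rewrite wact_cat. Qed.

Lemma orbit_refl l : orbit l l.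
Proof. by exists [::]. Qed.

Lemma unique_dom l l' mu : Ypp alpha l -> Ypp alpha l' ->
  orbit l mu -> orbit l' mu -> l = l'.
Proof.
move=> hl hl' h h'.
have o : orbit l l' by apply: orbit_trans h (orbit_sym h').
apply: leQ_anti; first exact: (orbit_le hl' (orbit_sym o)).
exact: (orbit_le hl o).
Qed.

Definition isQ (d : lat n) := exists c : I -> nat, d = \sum_k (c k)%:Z *: alphav k.

Definition ht (d : lat n) : nat :=
  match excluded_middle_informative (isQ d) with
  | left h => \sum_k proj1_sig (constructive_indefinite_description _ h) k
  | right _ => 0%N end.

Lemma ht_spec d (c : I -> nat) : d = \sum_k (c k)%:Z *: alphav k -> ht d = (\sum_k c k)%N.
Proof.
move=> hd; rewrite /ht; case: excluded_middle_informative => [h|h]; last first.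
  by exfalso; apply: h; exists c.
case: (constructive_indefinite_description _ h) => c' hc' /=.
have e := coef_unique (etrans (esym hc') hd).
by apply: eq_bigr => k _; rewrite e.
Qed.

Lemma sum_le (T : eqType) (s : seq T) (f g : T -> nat) :
  (forall x, x \in s -> f x <= g x)%N ->
  (\sum_(x <- s) f x <= \sum_(x <- s) g x)%N.
Proof.
elim: s => [|y s IH] hle; first by rewrite !big_nil.
rewrite !big_cons; apply: leq_add; first by apply: hle; rewrite mem_head.
by apply: IH => x hx; apply: hle; rewrite in_cons hx orbT.
Qed.

Lemma sum_lt (T : eqType) (s : seq T) (f g : T -> nat) :
  (forall x, x \in s -> f x <= g x)%N -> (exists2 x, x \in s & f x < g x)%N ->
  (\sum_(x <- s) f x < \sum_(x <- s) g x)%N.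
Proof.
elim: s => [|y s IH] hle [x hx hlt]; first by rewrite in_nil in hx.
have hle' : forall x, x \in s -> (f x <= g x)%N.
  by move=> z hz; apply: hle; rewrite in_cons hz orbT.
rewrite !big_cons; move: hx; rewrite in_cons => /orP [/eqP exy|hx].
  have := sum_le hle'; rewrite -exy; lia.
have := IH hle' (ex_intro2 _ _ x hx hlt); have := hle y (mem_head _ _); lia.
Qed.
Definition Phi (J : seq (lat n)) nu :=
  (\sum_(j <- J) (if pb (le nu j) then (ht (j - nu)).+1 else 0))%N.

Lemma ht_add d1 d2 : isQ d1 -> isQ d2 -> ht (d1 + d2) = (ht d1 + ht d2)%N.
Proof.
move=> [c1 h1] [c2 h2].
rewrite (ht_spec h1) (ht_spec h2) (@ht_spec _ (fun k => c1 k + c2 k)%N) ?big_split //.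
rewrite h1 h2 -big_split; apply: eq_bigr => k _.
by rewrite PoszD scalerDl.
Qed.

Lemma Phi_dec J nu i : al i nu < 0 -> (exists2 j, j \in J & le (r i nu) j) ->
  (Phi J (r i nu) < Phi J nu)%N.
Proof.
move=> hneg [j0 hj0 hle0].
have hup : le nu (r i nu) by apply: leQ_stepN; apply: ltW.
have hpos : (0 < ht (r i nu - nu))%N.
  have e : r i nu - nu = \sum_k (if k == i then `|al i nu|%N else 0%N)%:Z *: alphav k.
    rewrite (eq_bigr (fun k => (if k == i then `|al i nu|%:Z else 0) *: alphav k)).
      by rewrite sum_single ltz0_abs // /refl scaleNr addrAC subrr add0r.
    by move=> k _; case: (k == i).
  rewrite (ht_spec e) (bigD1 i) //= eqxx.
  have : (0 < `|al i nu|)%N by rewrite absz_gt0; apply: ltr0_neq0.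
  lia.
apply: sum_lt.
  move=> j _; case: (pbP (le (r i nu) j)) => [h|h] //.
  have h' : le nu j by apply: leQ_trans hup h.
  rewrite (introT (pbP _) h').
  have -> : j - nu = (j - r i nu) + (r i nu - nu) by rewrite addrA addrNK.
  rewrite (@ht_add (j - r i nu) (r i nu - nu)); first by lia.
  - by case: h => c hc; exists c.
  - by case: hup => c hc; exists c.
exists j0 => //.
rewrite (introT (pbP _) hle0).
have h' : le nu j0 by apply: leQ_trans hup hle0.
rewrite (introT (pbP _) h').
have -> : j0 - nu = (j0 - r i nu) + (r i nu - nu) by rewrite addrA addrNK.
rewrite (@ht_add (j0 - r i nu) (r i nu - nu)); first by lia.
  by case: hle0 => c hc; exists c.
by case: hup => c hc; exists c.
Qed.

Lemma yplus_of (R : pzRingType) (g : lat n -> R) :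
  in_inv_series alpha alphav g -> forall mu, g mu != 0 -> Yplus alpha alphav mu.
Proof.
move=> [[J hJ] hinv] mu hmu.
suff : forall N nu s0, nu = W s0 mu -> (Phi J nu <= N)%N -> Yplus alpha alphav mu.
  by move/(_ _ mu [::] erefl (leqnn _)).
elim=> [|N IH] nu s0 e hN;
  (case: (boolP [forall i, 0 <= al i nu]) => [/forallP hd|];
     [by exists s0; rewrite -e => i; apply: hd|]);
  move/forallPn => [i]; rewrite -ltNge => hi;
  (have hg : g (r i nu) != 0 by rewrite e -wact_cons hinv);
  have [j hj1 hj2] := hJ _ hg;
  have := Phi_dec hi (ex_intro2 _ _ j hj1 hj2).
- lia.
- move=> hlt; apply: (IH (r i nu) (i :: s0)); first by rewrite e.
  lia.
Qed.
Lemma is_sum_zero (R : pzRingType) (J : eqType) (P : J -> Prop) (F : J -> lat n -> R) g mu :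
  is_sum P F g -> (forall j, P j -> F j mu = 0) -> g mu = 0.
Proof.
move=> hs hz; have [s [_ hP _ ->]] := hs mu.
by rewrite big1_seq // => j /andP [_ hj]; apply: hz; apply: hP.
Qed.

Lemma is_sum_one (R : pzRingType) (J : eqType) (P : J -> Prop) (F : J -> lat n -> R) g mu j0 :
  is_sum P F g -> P j0 -> (forall j, P j -> F j mu != 0 -> j = j0) -> g mu = F j0 mu.
Proof.
move=> hs hj0 hu; have [s [us hP hc ->]] := hs mu.
have hz : forall j, j \in s -> j != j0 -> F j mu = 0.
  move=> j hj hne; apply/eqP; apply: contraNT hne => hF.
  by rewrite (hu j (hP j hj) hF).
case: (boolP (j0 \in s)) => hin.
  rewrite (bigD1_seq j0) //= big1_seq ?addr0 // => j /andP [hne hj].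
  exact: hz.
have hF0 : F j0 mu = 0.
  by apply/eqP; apply: contraNT hin => hF; apply: hc.
rewrite hF0 big1_seq // => j /andP [_ hj]; case: (eqVneq j j0) => [->|hne] //.
exact: hz.
Qed.

Lemma is_sum_nz (R : pzRingType) (J : eqType) (P : J -> Prop) (F : J -> lat n -> R) g mu :
  is_sum P F g -> g mu != 0 -> exists j, P j /\ F j mu != 0.
Proof.
move=> hs hg; case: (excluded_middle_informative (exists j, P j /\ F j mu != 0)) => // h.
exfalso; move/eqP: hg; apply; apply: (is_sum_zero hs) => j hj.
by case: (eqVneq (F j mu) 0) => // hF; exfalso; apply: h; exists j.
Qed.

Lemma is_sum_make (R : pzRingType) (J : eqType) (P : J -> Prop) (F : J -> lat n -> R) :
  (forall mu j j', P j -> P j' -> F j mu != 0 -> F j' mu != 0 -> j = j') ->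
  exists g, is_sum P F g.
Proof.
move=> hu.
pose g mu := match excluded_middle_informative (exists j, P j /\ F j mu != 0) with
  | left h => F (proj1_sig (constructive_indefinite_description _ h)) mu
  | right _ => 0 end.
exists g => mu; rewrite /g; case: excluded_middle_informative => [h|h].
  case: (constructive_indefinite_description _ h) => j0 [hj0 hF0] /=.
  exists [:: j0]; split => //.
  - by move=> j; rewrite inE => /eqP ->.
  - by move=> j hj hF; rewrite inE (hu mu j j0).
  - by rewrite big_seq1.
exists [::]; split => //; last by rewrite big_nil.
by move=> j hj hF; exfalso; apply: h; exists j.
Qed.

Lemma Efam_nz (R : pzRingType) (x : lat n -> R) l mu :
  Efam alpha alphav x l mu != 0 -> x l != 0 /\ orbit l mu.
Proof.
rewrite /Efam /Eorb; case: excluded_middle_informative => h; last by rewrite mulr0 eqxx.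
by rewrite mulr1.
Qed.

Lemma Efam_orb (R : pzRingType) (x : lat n -> R) l mu :
  orbit l mu -> Efam alpha alphav x l mu = x l.
Proof. by rewrite /Efam /Eorb; case: excluded_middle_informative => h // _; rewrite mulr1. Qed.

Lemma Efam_W (R : pzRingType) (x : lat n -> R) l mu s :
  Efam alpha alphav x l (W s mu) = Efam alpha alphav x l mu.
Proof.
rewrite /Efam /Eorb.
case: excluded_middle_informative => h1; case: excluded_middle_informative => h2 //.
- exfalso; apply: h2; apply: orbit_trans h1 _; exists (rev s); rewrite wact_revK.
  done.
- by exfalso; apply: h1; apply: orbit_trans h2 _; exists s.
Qed.

Lemma Efam_uniq (R : pzRingType) (x : lat n -> R) mu j j' :
  Ypp alpha j -> Ypp alpha j' ->
  Efam alpha alphav x j mu != 0 -> Efam alpha alphav x j' mu != 0 -> j = j'.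
Proof.
move=> hj hj' /Efam_nz [_ o] /Efam_nz [_ o'].
exact: unique_dom hj hj' o o'.
Qed.
Lemma orbit_of_yplus mu s : orbit (W s mu) mu.
Proof. by exists (rev s); rewrite wact_revK. Qed.

Lemma g_dom (R : pzRingType) (x g : lat n -> R) l :
  is_sum (Ypp alpha) (Efam alpha alphav x) g -> Ypp alpha l -> g l = x l.
Proof.
move=> hs hl; rewrite (is_sum_one (j0 := l) hs hl).
  by rewrite Efam_orb //; apply: orbit_refl.
move=> j hj hF; have [_ o] := Efam_nz hF; exact: unique_dom hj hl o (orbit_refl l).
Qed.

Lemma main_all (R : comPzRingType) :
  [/\ forall x : lat n -> R, AF alpha alphav x ->
        summable alphav (Ypp alpha) (Efam alpha alphav x) /\
        exists g : lat n -> R, is_sum (Ypp alpha) (Efam alpha alphav x) g,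
      forall (x g : lat n -> R), AF alpha alphav x ->
        is_sum (Ypp alpha) (Efam alpha alphav x) g ->
        in_inv_series alpha alphav g,
      forall (x y g : lat n -> R), AF alpha alphav x -> AF alpha alphav y ->
        is_sum (Ypp alpha) (Efam alpha alphav x) g ->
        is_sum (Ypp alpha) (Efam alpha alphav y) g ->
        forall l, Ypp alpha l -> x l = y l,
      forall g : lat n -> R, in_inv_series alpha alphav g ->
        exists2 x : lat n -> R, AF alpha alphav x &
          is_sum (Ypp alpha) (Efam alpha alphav x) g
    & forall g : lat n -> R, in_inv_series alpha alphav g ->
        forall mu, g mu != 0 -> Yplus alpha alphav mu].
Proof.
split.
- move=> x hx; split; last by apply: is_sum_make => mu j j' hj hj'; apply: Efam_uniq.
  split.
  + move=> mu.
    case: (excluded_middle_informative (exists j, Ypp alpha j /\ Efam alpha alphav x j mu != 0))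
      => [[j0 [hj0 hF0]]|h].
      by exists [:: j0] => j hj hF; rewrite inE (Efam_uniq hj hj0 hF hF0).
    by exists [::] => j hj hF; exfalso; apply: h; exists j.
  + case: hx => J hJ; exists J => mu [j [hj hF]].
    have [hx0 o] := Efam_nz hF.
    have [j' hj' hle] := hJ j (conj hj hx0).
    by exists j' => //; apply: leQ_trans (orbit_le hj o) hle.
- move=> x g hx hs; split.
  + case: hx => J hJ; exists J => mu hg.
    have [j [hj hF]] := is_sum_nz hs hg.
    have [hx0 o] := Efam_nz hF.
    have [j' hj' hle] := hJ j (conj hj hx0).
    by exists j' => //; apply: leQ_trans (orbit_le hj o) hle.
  + move=> s mu.
    case: (excluded_middle_informative (exists j, Ypp alpha j /\ Efam alpha alphav x j mu != 0))
      => [[j0 [hj0 hF0]]|h].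
      rewrite (is_sum_one (j0 := j0) hs hj0); last first.
        by move=> j hj; rewrite Efam_W => hF; apply: Efam_uniq hj hj0 hF hF0.
      rewrite Efam_W (is_sum_one (j0 := j0) hs hj0) //.
      by move=> j hj hF; apply: Efam_uniq hj hj0 hF hF0.
    rewrite (is_sum_zero hs); last first.
      move=> j hj; rewrite Efam_W.
      by case: (eqVneq (Efam alpha alphav x j mu) 0) => // hF; exfalso; apply: h; exists j.
    rewrite (is_sum_zero hs) // => j hj.
    by case: (eqVneq (Efam alpha alphav x j mu) 0) => // hF; exfalso; apply: h; exists j.
- move=> x y g _ _ hsx hsy l hl.
  by rewrite -(g_dom hsx hl) -(g_dom hsy hl).
- move=> g hg; exists g.
    by case: hg => [[J hJ] _]; exists J => l [_ hl]; apply: hJ.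
  move=> mu; case: (eqVneq (g mu) 0) => [h0|hnz].
    exists [::]; split => //; last by rewrite big_nil.
    move=> j hj hF; have [hgj [t e]] := Efam_nz hF.
    by exfalso; move: hgj; rewrite -(proj2 hg t j) -e h0 eqxx.
  have [s hs] := yplus_of hg hnz.
  exists [:: W s mu]; split => //.
  + by move=> j; rewrite inE => /eqP ->.
  + move=> j hj hF; rewrite inE; have [_ o] := Efam_nz hF; apply/eqP.
    exact: unique_dom hj hs o (orbit_of_yplus mu s).
  + by rewrite big_seq1 Efam_orb ?(proj2 hg) //; apply: orbit_of_yplus.
- exact: yplus_of.
Qed.
End Theory.

Theorem mainTheorem3 (I : finType) (n : nat) (A : I -> I -> int)
  (alpha alphav : I -> lat n) (R : comPzRingType) :
  gen_cartan A ->
  free_family alpha -> free_family alphav ->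
  (forall i j, pairing (alpha j) (alphav i) = A i j) ->
  [/\ (* summability of (x_lambda E(lambda))_{lambda in Y^{++}} *)
      forall x : lat n -> R, AF alpha alphav x ->
        summable alphav (Ypp alpha) (Efam alpha alphav x) /\
        exists g : lat n -> R, is_sum (Ypp alpha) (Efam alpha alphav x) g,
      (* the map E takes values in R[[Y]]^{W^v} *)
      forall (x g : lat n -> R), AF alpha alphav x ->
        is_sum (Ypp alpha) (Efam alpha alphav x) g ->
        in_inv_series alpha alphav g,
      (* E is injective on AF_R(Y^{++}) *)
      forall (x y g : lat n -> R), AF alpha alphav x -> AF alpha alphav y ->
        is_sum (Ypp alpha) (Efam alpha alphav x) g ->
        is_sum (Ypp alpha) (Efam alpha alphav y) g ->
        forall l, Ypp alpha l -> x l = y l,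
      (* E is surjective onto R[[Y]]^{W^v} *)
      forall g : lat n -> R, in_inv_series alpha alphav g ->
        exists2 x : lat n -> R, AF alpha alphav x &
          is_sum (Ypp alpha) (Efam alpha alphav x) g
    & (* supports of invariant series lie in Y^+ *)
      forall g : lat n -> R, in_inv_series alpha alphav g ->
        forall mu, g mu != 0 -> Yplus alpha alphav mu].
Proof.
move=> hA _ fav hpair.
exact: (main_all hA fav hpair R).
Qed.
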